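(* For $n\ge2$ let $\sigma_1,\sigma_2,\dots$ be independent exponential random variables, $\sigma_i$ having rate $17\,i\sqrt{\log n}$. Then for all $\alpha<1$, all $\beta<\alpha$ and any $c_3>0$, for all $n$ large enough, $$\mathbf P\Big(\sum_{i=1}^{n^\alpha}\sigma_i<1\Big)\le e^{-c_3n^\beta}.$$
   Context: The upper summation limit $n^\alpha$ is understood as $\lfloor n^\alpha\rfloor$; $\alpha$ is positive. *)

(* Defs.v *)
From HB Require Import structures.
From mathcomp Require Import all_boot all_order all_algebra.
From mathcomp Require Import finmap.
From mathcomp Require Import all_classical all_reals all_analysis.
Set Implicit Arguments. Unset Strict Implicit. Unset Printing Implicit Defensive.
Import Order.TTheory GRing.Theory Num.Theory.
Local Open Scope classical_set_scope.
Local Open Scope ring_scope.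

Definition mutually_independent {d} {T : measurableType d} {R : realType}
    (P : probability T R) (X : nat -> {RV P >-> R}) : Prop :=
  forall (I : {fset nat}) (B : nat -> set R),
    (forall i, i \in I -> measurable (B i)) ->
    P (\bigcap_(i in [set` I]) (X i @^-1` B i)) =
    (\prod_(i <- I) P (X i @^-1` B i))%E.

Definition exponential_rv {d} {T : measurableType d} {R : realType}
    (P : probability T R) (X : {RV P >-> R}) (rate : R) : Prop :=
  forall A : set R, measurable A -> P (X @^-1` A) = exponential_prob rate A.

(* Main.v *)
Require Import Defs.
From HB Require Import structures.
From mathcomp Require Import all_boot all_order all_algebra.
From mathcomp Require Import finmap.
From mathcomp Require Import all_classical all_reals all_analysis.
From mathcomp Require Import measurable_realfun.
From mathcomp Require Import ring lra.
Import Order.TTheory GRing.Theory Num.Theory.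
Import numFieldNormedType.Exports.
Local Open Scope classical_set_scope.
Local Open Scope ring_scope.

Section E.
Context {R : realType}.
Local Notation mu := (@lebesgue_measure R).

Lemma expprob_neg (r : R) : exponential_prob r `]-oo, 0[ = 0%E.
Proof.
rewrite /exponential_prob integral0_eq // => x /=; rewrite in_itv /= => x0.
by rewrite lt0_exponential_pdf.
Qed.

Let cexpNM (rate : R) : continuous (fun z : R^o => expR (- rate * z)).
Proof.
move=> z; apply: continuous_comp; last exact: continuous_expR.
by apply: continuousM => //; apply: (@continuousN _ R^o); exact: cst_continuous.
Qed.

Lemma expprob_cc (rate a b : R) : 0 <= a -> a < b ->
  exponential_prob rate `[a, b] = (expR (- rate * a) - expR (- rate * b))%:E.
Proof.
move=> a0 ab.
rewrite /exponential_prob.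
rewrite (@continuous_FTC2 _ _ (fun x => - expR (- rate * x))) //.
- by rewrite -EFinD opprK addrC.
- apply: (@continuous_subspaceW R^o _ _ [set` `[0, +oo[%R]).
  + move=> x /=; rewrite !in_itv /= => /andP[ax _]; rewrite (le_trans a0 ax).
    done.
  + exact: within_continuous_exponential_pdf.
- split.
  + by move=> z _; exact: ex_derive.
  + by apply/cvg_at_right_filter; apply: cvgN; exact: cexpNM.
  + by apply/cvg_at_left_filter; apply: cvgN; exact: cexpNM.
- move=> z; rewrite in_itv/= => /andP[az _].
  by apply: derive1_exponential_pdf; rewrite in_itv/= andbT (le_lt_trans a0 az).
Qed.

Lemma expprob_co (rate a b : R) : 0 <= a -> a < b ->
  exponential_prob rate `[a, b[ = (expR (- rate * a) - expR (- rate * b))%:E.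
Proof.
move=> a0 ab; rewrite -expprob_cc //.
rewrite /exponential_prob integral_itv_bndo_bndc //.
apply/measurable_EFinP; apply: measurable_funTS; exact: measurable_exponential_pdf.
Qed.
End E.


Section Main.
Context {R : realType} {d : measure_display} {T : measurableType d}
  (P : probability T R) (sigma : nat -> {RV P >-> R}).

Definition itvK (K l : nat) : set R := `[l%:R / K.+1%:R, l.+1%:R / K.+1%:R[.

Definition qv (lam : R) (K l : nat) : R :=
  expR (- lam * (l%:R / K.+1%:R)) - expR (- lam * (l.+1%:R / K.+1%:R)).

Lemma prob_itv k lam K l : exponential_rv (sigma k) lam ->
  P (sigma k @^-1` itvK K l) = (qv lam K l)%:E.
Proof.
move=> H; rewrite H; last exact: measurable_itv.
rewrite expprob_co //.
by rewrite ltr_pM2r ?invr_gt0 ?ltr0Sn // ltr_nat.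
Qed.

Definition Bj {m K} (j : {ffun 'I_m -> 'I_K.+1}) (i : nat) : set R :=
  if (insub i : option 'I_m) is Some k then itvK K (j k) else setT.

Definition Ej {m K} (j : {ffun 'I_m -> 'I_K.+1}) : set T :=
  \bigcap_(i in [set` fset_set `I_m]) (sigma i @^-1` Bj j i).

Lemma probE m K (lam : nat -> R) (j : {ffun 'I_m -> 'I_K.+1}) :
  mutually_independent sigma ->
  (forall k, exponential_rv (sigma k) (lam k)) ->
  P (Ej j) = (\prod_(k : 'I_m) qv (lam k) K (j k))%:E.
Proof.
move=> Hind Hexp; rewrite /Ej Hind; last first.
  move=> i _; rewrite /Bj; case: insub => [k|//]; exact: measurable_itv.
rewrite -fsbig_finite; last exact: finite_II.
rewrite -fsbig_ord -prodEFin; apply: eq_bigr => k _.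
by rewrite /Bj valK (prob_itv _ _ _ _ (Hexp k)).
Qed.


Lemma fsbig_finT (I : finType) (F : I -> \bar R) :
  (\sum_(j \in [set: I]) F j = \sum_(j : I) F j)%E.
Proof.
have -> : [set: I] = [set` enum I].
  by apply/seteqP; split => x //= _; rewrite mem_enum.
by rewrite -fsbig_seq ?enum_uniq // big_enum.
Qed.

Lemma main_bound m K (lam : nat -> R) :
  mutually_independent sigma ->
  (forall k, exponential_rv (sigma k) (lam k)) ->
  (P [set w | (\sum_(k < m) sigma k w < 1)%R] <=
   (\sum_(j : {ffun 'I_m -> 'I_K.+1})
      ((\sum_(k : 'I_m) (j k : nat) < K.+1)%N)%:R *
       \prod_(k : 'I_m) qv (lam k) K (j k))%:E)%E.
Proof.
move=> Hind Hexp.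
set S := [set w | _].
have mS : measurable S.
  have -> : S = (fun w => \sum_(k < m) sigma k w) @^-1` `]-oo, 1[.
    by apply/seteqP; split => w /=; rewrite in_itv /=.
  rewrite -[X in measurable X]setTI; apply: measurable_sum => //.

set N := \big[setU/set0]_(k < m) (sigma k @^-1` `]-oo, 0[).
have mN : measurable N.
  by apply: bigsetU_measurable => k _; apply: measurable_funPTI; exact: measurable_itv.
have mE (j : {ffun 'I_m -> 'I_K.+1}) : measurable (Ej j).
  apply: fin_bigcap_measurable; first exact: finite_fset.
  move=> i _; apply: measurable_funPTI; rewrite /Bj; case: insub => [k|//].
  exact: measurable_itv.
set A := fun j : {ffun 'I_m -> 'I_K.+1} =>
  if (\sum_(k : 'I_m) (j k : nat) < K.+1)%N then Ej j else set0.
have mA j : measurable (A j) by rewrite /A; case: ifP.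
set U := \bigcup_(j in [set: {ffun 'I_m -> 'I_K.+1}]) A j.
have mU : measurable U.
  by apply: fin_bigcup_measurable => // j _; exact: mA.
have cover : S `<=` N `|` U.
  move=> w Sw; have [Nw|nNw] := pselect (N w); [by left | right].
  have pos (k : 'I_m) : 0 <= sigma k w.
    rewrite leNgt; apply/negP => neg; apply: nNw.
    rewrite /N -(bigcup_mkord m (fun k => sigma k @^-1` `]-oo, 0[)).
    by exists k => //=; rewrite in_itv.
  have lt1 (k : 'I_m) : sigma k w < 1.
    apply: le_lt_trans Sw; rewrite (bigD1 k) //= lerDl.
    by apply: sumr_ge0 => i _; exact: pos.
  have K0 : (0 : R) < K.+1%:R by rewrite ltr0Sn.
  set x := fun k : 'I_m => K.+1%:R * sigma k w.
  have x0 k : 0 <= x k by rewrite mulr_ge0 // ltW.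
  have tr k : (Num.truncn (x k) <= K)%N.
    by rewrite truncn_le_nat /x -[X in _ < X]mulr1 ltr_pM2l.
  pose j := [ffun k : 'I_m => (inord (Num.truncn (x k)) : 'I_K.+1)].
  have jk k : (j k : nat) = Num.truncn (x k) by rewrite ffunE inordK // ltnS.
  exists j => //; rewrite /A ifT.
    move=> i /=; rewrite in_fset_set ?inE; last exact: finite_II.
    move=> /= im; rewrite /Bj insubT /itvK /= in_itv /= jk.
    have /andP[h1 h2] := truncn_itv (x0 (Sub i im)).
    by rewrite ler_pdivrMr // ltr_pdivlMr // ![sigma i w * _]mulrC h1.
  rewrite -(ltr_nat R) natr_sum.
  apply: (@le_lt_trans _ _ (\sum_(k < m) x k)).
    by apply: ler_sum => k _; rewrite jk; have /andP[] := truncn_itv (x0 k).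
  by rewrite /x -mulr_sumr -[X in _ < X]mulr1 ltr_pM2l.
have PN : P N = 0%E.
  apply/eqP; rewrite -measure_le0.
  apply: (le_trans (@content_subadditive _ _ _ P N
     (fun k => sigma k @^-1` `]-oo, 0[) m _ mN _)).
  - by move=> k _; apply: measurable_funPTI; exact: measurable_itv.
  - exact: subset_refl.
  rewrite big1 // => k _; have := Hexp k _ (measurable_itv `]-oo, 0[); rewrite expprob_neg; exact.
apply: (le_trans (le_measure _ _ _ cover)); rewrite ?inE //; first exact: measurableU.
apply: (le_trans (measureU2 _ _ _)) => //.
apply: (@le_trans _ _ (0 + P U)%E).
  by apply: leeD => //; rewrite -PN; exact: lexx.
rewrite add0e.
apply: (le_trans (@content_sub_fsum _ _ _ P _ [set: {ffun 'I_m -> 'I_K.+1}] U A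
   finite_finset (fun j _ => mA j) mU (@subset_refl _ U))).
rewrite fsbig_finT -sumEFin lee_sum // => j _.
rewrite /A; case: ifP => _; last by rewrite measure0 mul0r.
rewrite mul1r -(probE _ _ _ j Hind Hexp); exact: lexx.
Qed.

End Main.


Section Real.
Context {R : realType}.

Lemma geom_le (x : R) n : 0 <= x -> x < 1 -> \sum_(i < n) x ^+ i <= (1 - x)^-1.
Proof.
move=> x0 x1.
have h : (1 - x) * \sum_(i < n) x ^+ i = 1 - x ^+ n.
  by rewrite -opprB mulNr -subrX1 opprB.
have p : 0 < 1 - x by rewrite subr_gt0.
rewrite -(ler_pM2l p) h mulfV ?gt_eqF //.
by rewrite lerBlDr lerDl exprn_ge0.
Qed.

Lemma expR_div (c : R) K l :
  expR (- c * (l%:R / K.+1%:R)) = expR (- (c / K.+1%:R)) ^+ l.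
Proof. by rewrite -expRM_natl mulNr mulrN mulrCA. Qed.

Lemma sum_factor (lam t : R) K : 0 < lam -> 0 <= t ->
  \sum_(l < K.+1) qv lam K l * expR (- t * (l%:R / K.+1%:R)) <=
  (lam / K.+1%:R) * (1 + (lam / K.+1%:R + t / K.+1%:R)) /
     (lam / K.+1%:R + t / K.+1%:R).
Proof.
move=> lam0 t0.
have K0 : (0 : R) < K.+1%:R by rewrite ltr0Sn.
set u := lam / K.+1%:R; set v := t / K.+1%:R.
have u0 : 0 < u by rewrite divr_gt0.
have v0 : 0 <= v by rewrite divr_ge0 // ltW.
set a := expR (- u); set r := expR (- v).
have E l : qv lam K l * expR (- t * (l%:R / K.+1%:R)) = (1 - a) * (a * r) ^+ l.
  rewrite /qv !expR_div -/u -/v -/a -/r exprSr exprMn; ring.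
under eq_bigr do rewrite E.
rewrite -mulr_sumr.
have a0 : 0 <= a by rewrite ltW // expR_gt0.
have r0 : 0 <= r by rewrite ltW // expR_gt0.
have ar : a * r = expR (- (u + v)) by rewrite /a /r -expRD opprD.
have ar1 : a * r < 1 by rewrite ar expR_lt1 oppr_lt0 ltr_wpDr.
have ga : 0 <= 1 - a by rewrite subr_ge0 expR_le1 oppr_le0 ltW.
have G := geom_le (a * r) K.+1 (mulr_ge0 a0 r0) ar1.
apply: le_trans (ler_wpM2l ga G) _.
have uv : 0 < u + v by rewrite ltr_wpDr.
have h1 : 1 - a <= u by have := expR_ge1Dx (- u); rewrite -/a; lra.
have h2 : (u + v) / (1 + (u + v)) <= 1 - a * r.
  have p1 : 0 < 1 + (u + v) by lra.
  rewrite ar expRN ler_pdivrMr //.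
  have := expR_ge1Dx (u + v); set e := expR (u + v) => he.
  have e0 : 0 < e by rewrite expR_gt0.
  have : e^-1 * (1 + (u + v)) <= 1 by rewrite mulrC ler_pdivrMr // mul1r.
  lra.
have w0 : 0 < (u + v) / (1 + (u + v)) by rewrite divr_gt0 //; lra.
apply: (@le_trans _ _ ((1 - a) / ((u + v) / (1 + (u + v))))).
  by rewrite ler_wpM2l // lef_pV2 // ?posrE // (lt_le_trans w0 h2).
rewrite invf_div mulrA ler_wpM2r //.
  by rewrite invr_ge0; lra.
by rewrite ler_wpM2r //; lra.
Qed.


Lemma chernoff_sum m K (q : 'I_m -> nat -> R) (t : R) : 0 <= t ->
  (forall k l, 0 <= q k l) ->
  \sum_(j : {ffun 'I_m -> 'I_K.+1})
     ((\sum_(k : 'I_m) (j k : nat) < K.+1)%N)%:R * \prod_(k : 'I_m) q k (j k)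
  <= expR t * \prod_(k : 'I_m) \sum_(l < K.+1) q k l * expR (- t * (l%:R / K.+1%:R)).
Proof.
move=> t0 q0.
rewrite bigA_distr_bigA mulr_sumr; apply: ler_sum => j _.
rewrite big_split /= -expR_sum mulrCA -expRD.
have p0 : 0 <= \prod_(k : 'I_m) q k (j k) by apply: prodr_ge0 => k _.
have [h|h] := boolP (\sum_(k : 'I_m) (j k : nat) < K.+1)%N; rewrite ?h /=; last first.
  by rewrite mulr0n mul0r mulr_ge0 // ltW // expR_gt0.
rewrite mulr1n [X in _ <= X]mulrC ler_wpM2r //.
have K0 : (0 : R) < K.+1%:R by rewrite ltr0Sn.
have -> : \sum_(k : 'I_m) (- t * ((j k : nat)%:R / K.+1%:R)) =
          - t * ((\sum_(k : 'I_m) (j k : nat))%:R / K.+1%:R).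
  by rewrite natr_sum mulr_suml mulr_sumr.
have s1 : (\sum_(k : 'I_m) (j k : nat))%:R / K.+1%:R <= 1 :> R.
  by rewrite ler_pdivrMr // mul1r ler_nat ltnW.
apply: (le_trans _ (expR_ge1Dx _)).
have s0 : 0 <= (\sum_(k : 'I_m) (j k : nat))%:R / K.+1%:R :> R.
  by rewrite divr_ge0 // ltW.
have : 0 <= t * (1 - (\sum_(k < m) (j k : nat))%:R / K.+1%:R) by rewrite mulr_ge0 // subr_ge0.
by rewrite mulrBr mulr1 mulNr lerDl.
Qed.

End Real.


Lemma qv_ge0 {R : realType} (lam : R) K l : 0 <= lam -> 0 <= qv lam K l.
Proof.
move=> l0; rewrite /qv subr_ge0 ler_expR !mulNr lerN2 ler_wpM2l //.
by rewrite ler_pM2r ?invr_gt0 ?ltr0Sn // ler_nat.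
Qed.

Lemma factor_exp {R : realType} (u v : R) : 0 < u -> 0 <= v ->
  u * (1 + (u + v)) / (u + v) <= expR ((u + v) - v / (u + v)).
Proof.
move=> u0 v0; have w0 : 0 < u + v by lra.
rewrite expRD [X in _ <= X]mulrC mulrAC; apply: ler_pM.
- by rewrite divr_ge0 //; lra.
- lra.
- have -> : u / (u + v) = 1 + (- (v / (u + v))).
    by field; rewrite gt_eqF.
  exact: expR_ge1Dx.
- exact: expR_ge1Dx.
Qed.

Lemma prob_bound {R : realType} {d : measure_display} {T : measurableType d}
  (P : probability T R) (sigma : nat -> {RV P >-> R}) m K (lam : nat -> R) (t : R) :
  mutually_independent sigma ->
  (forall k, exponential_rv (sigma k) (lam k)) ->
  (forall k, 0 < lam k) -> 0 <= t ->
  \sum_(k < m) (lam k + t) <= K.+1%:R ->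
  (P [set w | (\sum_(k < m) sigma k w < 1)%R] <=
     (expR (t + 1 - \sum_(k < m) t / (lam k + t)))%:E)%E.
Proof.
move=> Hind Hexp lam0 t0 Hsum.
apply: (le_trans (main_bound P sigma m K lam Hind Hexp)); rewrite lee_fin.
apply: (le_trans (@chernoff_sum R m K (fun (k : 'I_m) l => qv (lam k) K l) t t0 _)).
  by move=> k l; apply: qv_ge0; exact: ltW.
have K0 : (0 : R) < K.+1%:R by rewrite ltr0Sn.
set u := fun k : 'I_m => lam k / K.+1%:R.
set v := t / K.+1%:R.
have u0 k : 0 < u k by rewrite divr_gt0.
have v0 : 0 <= v by rewrite divr_ge0 // ltW.
apply: (@le_trans _ _ (expR t * \prod_(k : 'I_m) expR ((u k + v) - v / (u k + v)))).
  apply: ler_wpM2l; first exact/ltW/expR_gt0.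
  apply: ler_prod => k _; apply/andP; split.
    by apply: sumr_ge0 => l _; rewrite mulr_ge0 ?qv_ge0 ?ltW ?expR_gt0.
  apply: (le_trans (sum_factor _ _ K (lam0 k) t0)); exact: (factor_exp _ _ (u0 k) v0).
rewrite -expR_sum -expRD ler_expR big_split /= sumrN.
have -> : \sum_(k < m) (u k + v) = (\sum_(k < m) (lam k + t)) / K.+1%:R.
  by rewrite mulr_suml; apply: eq_bigr => k _; rewrite mulrDl.
have -> : \sum_(k < m) v / (u k + v) = \sum_(k < m) t / (lam k + t).
  apply: eq_bigr => k _; rewrite /u /v -mulrDl invf_div mulrA mulfVK ?gt_eqF //.
have : (\sum_(k < m) (lam k + t)) / K.+1%:R <= 1 by rewrite ler_pdivrMr // mul1r.
move: (_ / K.+1%:R) (\sum_(k < m) t / (lam k + t)) => a b; lra.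
Qed.


Lemma ln_step {R : realType} (x : R) : 0 < x -> ln (x + 1) - ln x <= x^-1.
Proof.
move=> x0.
have -> : x + 1 = x * (1 + x^-1) by rewrite mulrDr mulr1 mulfV ?gt_eqF.
rewrite lnM ?posrE //; last by rewrite ltr_wpDr // ?invr_ge0 ?ltW.
rewrite [ln x + _]addrC addrK; apply: le_ln1Dx.
have : 0 < x^-1 by rewrite invr_gt0.
lra.
Qed.

Lemma harm {R : realType} (L : R) m : 0 < L ->
  L * (ln (m%:R + L + 1) - ln (L + 1)) <= \sum_(k < m) L / (k.+1%:R + L).
Proof.
move=> L0.
pose f i := ln (i%:R + L + 1).
have -> : ln (m%:R + L + 1) - ln (L + 1) = f m - f 0%N by rewrite /f add0r.
rewrite -(telescope_sumr _ (leq0n m)) big_mkord mulr_sumr.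
apply: ler_sum => k _; rewrite /f.
have x0 : 0 < k%:R + L + 1 by rewrite ltr_wpDl // addr_ge0 // ltW.
rewrite ler_pM2l // -natr1 [_ + 1 + L]addrAC.
exact: ln_step _ x0.
Qed.

Theorem mainTheorem8 (R : realType) (alpha beta c3 : R) :
  0 < alpha -> alpha < 1 -> beta < alpha -> 0 < c3 ->
  exists N : nat, forall n : nat, (N <= n)%N -> (2 <= n)%N ->
    forall (d : measure_display) (T : measurableType d) (P : probability T R)
           (sigma : nat -> {RV P >-> R}),
      mutually_independent sigma ->
      (forall k : nat, exponential_rv (sigma k)
                         (17 * k.+1%:R * Num.sqrt (ln (n%:R : R)))) ->
      (P [set t | (\sum_(k < Num.truncn ((n%:R : R) `^ alpha)) sigma k t < 1)%R]
         <= (expR (- c3 * (n%:R : R) `^ beta))%:E)%E.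
Proof.
move=> a0 a1 ba c0.
pose b := Num.max beta (alpha / 2).
have bb : beta <= b by rewrite le_max lexx.
have b0 : 0 < b by rewrite lt_max; apply/orP; right; lra.
have ba2 : b < alpha by rewrite gt_max ba /=; lra.
pose del := (alpha - b) / 2.
have d0 : 0 < del by rewrite /del; lra.
pose C := (c3 + 3) * expR 1 + 1.
have e1 : 1 <= expR (1 : R) by have := expR_ge1Dx (1 : R); lra.
have C0 : 1 < C by rewrite /C; nra.
pose l0 := Num.max ((17 / del) ^+ 2) (ln C / del).
exists (Num.truncn (expR l0)).+1.
move=> n Nn n2 d T P sigma Hind Hexp.
have nR : (2 : R) <= n%:R by rewrite (ler_nat R 2 n).
have n0 : 0 < (n%:R : R) by lra.
set l := ln (n%:R : R).
have hl0 : l0 < l.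
  rewrite -ltr_expR lnK ?posrE //.
  apply: (lt_le_trans (truncnS_gt (expR l0))); by rewrite ler_nat.
have l0p : 0 < l by apply: ln_gt0; lra.
have hA : (17 / del) ^+ 2 <= l.
  by apply: (le_trans _ (ltW hl0)); rewrite le_max lexx.
have hB : ln C / del <= l.
  by apply: (le_trans _ (ltW hl0)); rewrite le_max lexx orbT.
set s := Num.sqrt l.
have s0 : 0 < s by rewrite sqrtr_gt0.
have ss : s * s = l by rewrite -expr2 sqr_sqrtr // ltW.
have s17 : 17 / del <= s.
  have h17 : 0 <= 17 / del by rewrite divr_ge0 // ltW.
  by rewrite -[17 / del]ger0_norm // -sqrtr_sqr ler_sqrt // ltW.
have ds : 17 <= s * del by rewrite -ler_pdivrMr.
have hA' : 17 * s <= del * l by rewrite -ss; nra.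
have hB' : C <= expR (del * l).
  rewrite -[C]lnK ?posrE; last lra.
  by rewrite ler_expR mulrC -ler_pdivrMr.
have pw x : (n%:R : R) `^ x = expR (x * l) by rewrite /powR gt_eqF.
set m := Num.truncn ((n%:R : R) `^ alpha).
have hm : expR (alpha * l) - 1 < m%:R.
  by have := truncnS_gt ((n%:R : R) `^ alpha); rewrite -/m pw -natr1; lra.
set E := expR (b * l).
have E1 : 1 <= E by rewrite /E -expR0 ler_expR; nra.
pose L := (Num.truncn (c3 * E)).+2.
have hL1 : c3 * E + 1 < L%:R.
  have := truncnS_gt (c3 * E); rewrite /L -addn2 natrD -addn1 natrD; lra.
have hL2 : L%:R <= c3 * E + 2.
  have /andP[h _] := truncn_itv (mulr_ge0 (ltW c0) (le_trans ler01 E1)).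
  rewrite /L -addn2 natrD; lra.
have L0 : (0 : R) < L%:R by apply: (le_lt_trans _ hL1); nra.
set lam := fun k : nat => 17 * k.+1%:R * s.
have lam0 k : 0 < lam k by rewrite /lam mulr_gt0 // mulr_gt0 // ltr0Sn.
set t := 17 * s * L%:R.
have t0 : 0 <= t by rewrite /t mulr_ge0 // ?mulr_ge0 // ltW.
set K := Num.truncn (\sum_(k < m) (lam k + t)).
have HK : \sum_(k < m) (lam k + t) <= K.+1%:R by apply/ltW/truncnS_gt.
have := prob_bound P sigma m K lam t Hind Hexp lam0 t0 HK.
move/le_trans; apply; rewrite lee_fin ler_expR.
have eqL : \sum_(k < m) t / (lam k + t) = \sum_(k < m) L%:R / (k.+1%:R + L%:R).
  apply: eq_bigr => k _; rewrite /t /lam.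
  have -> : 17 * k.+1%:R * s + 17 * s * L%:R = (17 * s) * (k.+1%:R + L%:R) by ring.
  rewrite invfM mulrACA mulfV ?mul1r // mulf_neq0 //; lra.
rewrite eqL.
have Hh := harm L%:R m L0.
have Hln : 17 * s + 1 <= ln (m%:R + L%:R + 1) - ln (L%:R + 1).
  have Lp1 : 0 < L%:R + 1 :> R by lra.
  set D := expR (del * l).
  have D0 : 1 < D by exact: (lt_le_trans C0 hB').
  have e17 : expR (17 * s + 1) <= D * expR 1 by rewrite -expRD ler_expR; lra.
  have hL3 : L%:R + 1 <= (c3 + 3) * E by nra.
  have hal : expR (alpha * l) = E * D * D.
    rewrite /E /D -!expRD -!mulrDl; congr (expR (_ * l)); rewrite /del; lra.
  have ED1 : 1 <= E * D by nra.
  have h1 : E * D * C <= E * D * D by rewrite ler_wpM2l //; lra.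
  have h2 : E * D * C = (c3 + 3) * expR 1 * (E * D) + E * D by rewrite /C; ring.
  have h4 : (L%:R + 1) * expR (17 * s + 1) <= (c3 + 3) * E * (D * expR 1).
    apply: ler_pM; [lra | exact/ltW/expR_gt0 | exact: hL3 | exact: e17].
  have key : (L%:R + 1) * expR (17 * s + 1) <= m%:R + L%:R + 1.
    have h5 : (c3 + 3) * E * (D * expR 1) = (c3 + 3) * expR 1 * (E * D) by ring.
    rewrite hal in hm; lra.
  have : ln ((L%:R + 1) * expR (17 * s + 1)) <= ln (m%:R + L%:R + 1).
    rewrite ler_ln ?posrE //; first by rewrite mulr_gt0 // expR_gt0.
  rewrite lnM ?posrE ?expR_gt0 // expRK; lra.
have : L%:R * (17 * s + 1) <= L%:R * (ln (m%:R + L%:R + 1) - ln (L%:R + 1)).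
  by rewrite ler_pM2l.
have hbeta : expR (beta * l) <= E by rewrite /E ler_expR ler_pM2r.
rewrite pw.
move: Hh; move: (\sum_(k < m) _) => S Hh.
move: (ln _ - ln _) => D HD.
rewrite /t; nra.
Qed.
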